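(* Let $G$ be a non-singular graph with $n$ vertices and adjacency matrix $A=(a_{ij})$. If $f:\mathcal{A}_{RW}(G)\to\mathcal{A}(G)$ is an algebra homomorphism, then either $f$ is the null map, or $f$ is an isomorphism given by $f(e_i)=\alpha_i e_{\pi(i)}$ for all $i\in V$, where $\alpha_i\neq0$ are scalars and $\pi$ is an element of the symmetric group $S_n$.
   Context: Graphs are simple (no loops or multiple edges) and connected; here $V=\{1,\dots,n\}$ is finite. The adjacency matrix is $A=(a_{ij})$ with $a_{ij}=1$ if $i,j$ are neighbors and $0$ otherwise; $G$ is non-singular if $\det A\ne0$. $\deg(i)$ is the number of neighbors of $i$. An evolution algebra over $\mathbb{R}$ is an algebra with a basis $\{e_i\}$ (natural basis) such that $e_i\cdot e_j=0$ for $i\ne j$ and $e_i\cdot e_i=\sum_k c_{ik}e_k$. $\mathcal{A}(G)$ has natural basis $\{e_i:i\in V\}$ with $e_i\cdot e_i=\sum_{k\in V}a_{ik}e_k$; $\mathcal{A}_{RW}(G)$ has natural basis $\{e_i:i\in V\}$ with $e_i\cdot e_i=\sum_{k\in V}\frac{a_{ik}}{\deg(i)}e_k$; in both, $e_i\cdot e_j=0$ for $i\ne j$. A homomorphism is a linear map $f$ with $f(u\cdot v)=f(u)\cdot f(v)$. *)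

(* Defs.v *)
From HB Require Import structures.
From mathcomp Require Import all_boot all_order all_algebra.
From mathcomp Require Import fingroup perm.
From mathcomp Require Import reals.
Set Implicit Arguments. Unset Strict Implicit. Unset Printing Implicit Defensive.
Import Order.TTheory GRing.Theory Num.Theory.
Local Open Scope ring_scope.

(* A simple graph on the vertex set V = 'I_n (= {0,...,n-1}, standing for
   {1,...,n}) is a symmetric irreflexive boolean relation [e]. *)
Definition simple_graph (n : nat) (e : rel 'I_n) : Prop :=
  (forall i j, e i j = e j i) /\ (forall i, ~~ e i i).

Definition connected_graph (n : nat) (e : rel 'I_n) : Prop :=
  forall i j, connect e i j.

Definition adjacency (R : realType) (n : nat) (e : rel 'I_n) : 'M[R]_n :=
  \matrix_(i, j) (e i j)%:R.

Definition nonsingular (R : realType) (n : nat) (e : rel 'I_n) : Prop :=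
  \det (adjacency R e) != 0.

Definition deg (n : nat) (e : rel 'I_n) (i : 'I_n) : nat := #|[set j | e i j]|.

(* Evolution algebra on R^n with natural basis e_i = delta_mx 0 i (row
   vectors) and structure matrix C: e_i * e_i = sum_k C i k e_k,
   e_i * e_j = 0 for i <> j. Bilinear extension:
   u * v = sum_i u_i v_i (e_i * e_i). *)
Definition basis_vec (R : realType) (n : nat) (i : 'I_n) : 'rV[R]_n :=
  delta_mx 0 i.

Definition evol_mul (R : realType) (n : nat) (C : 'M[R]_n)
  (u v : 'rV[R]_n) : 'rV[R]_n :=
  \sum_(i < n) (u 0 i * v 0 i) *: row i C.

Definition struct_A (R : realType) (n : nat) (e : rel 'I_n) : 'M[R]_n :=
  adjacency R e.

Definition struct_RW (R : realType) (n : nat) (e : rel 'I_n) : 'M[R]_n :=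
  \matrix_(i, k) ((e i k)%:R / (deg e i)%:R).

Definition evol_hom (R : realType) (n : nat) (C1 C2 : 'M[R]_n)
  (f : {linear 'rV[R]_n -> 'rV[R]_n}) : Prop :=
  forall u v, f (evol_mul C1 u v) = evol_mul C2 (f u) (f v).

(* Main.v *)
Require Import Defs.
From HB Require Import structures.
From mathcomp Require Import all_boot all_order all_algebra.
From mathcomp Require Import fingroup perm.
From mathcomp Require Import reals.
Import Order.TTheory GRing.Theory Num.Theory.
Local Open Scope ring_scope.

Section Aux.
Variables (R : realType) (n : nat).

Lemma evol_mulE (C : 'M[R]_n) u v :
  evol_mul C u v = (\row_i (u 0 i * v 0 i)) *m C.
Proof. by rewrite mulmx_sum_row /evol_mul; apply: eq_bigr => i _; rewrite mxE. Qed.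

Lemma evol_mul_basis (C : 'M[R]_n) i j :
  evol_mul C (basis_vec R i) (basis_vec R j) = if i == j then row i C else 0.
Proof.
rewrite /evol_mul (bigD1 i) //= big1 => [|k /negbTE ki].
  rewrite !mxE /=; case: (eqVneq i j) => [->|ij]; first by rewrite !eqxx mulr1 scale1r addr0.
  by rewrite ?eqxx ?(negbTE ij) mulr0 scale0r addr0.
rewrite /basis_vec !mxE. by rewrite ki mul0r scale0r.
Qed.

Lemma f_expand (f : {linear 'rV[R]_n -> 'rV[R]_n}) u :
  f u = \sum_i u 0 i *: f (basis_vec R i).
Proof. by rewrite {1}(row_sum_delta u) linear_sum; apply: eq_bigr => i _; rewrite linearZ. Qed.

End Aux.

Theorem proposition2p15 (R : realType) (n : nat) (e : rel 'I_n)
  (f : {linear 'rV[R]_n -> 'rV[R]_n}) :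
  simple_graph e -> connected_graph e -> nonsingular R e ->
  evol_hom (struct_RW R e) (struct_A R e) f ->
  (forall u, f u = 0) \/
  (bijective f /\
   exists (alpha : 'I_n -> R) (pi : 'S_n),
     (forall i, alpha i != 0) /\
     (forall i, f (basis_vec R i) = alpha i *: basis_vec R (pi i))).
Proof.
move=> [esymm eirr] conn ns hom.
set X := fun i => f (basis_vec R i).
have Aunit : struct_A R e \in unitmx by rewrite unitmxE unitfE.
have disj : forall i j m, i != j -> X i 0 m * X j 0 m = 0.
  move=> i j m ij.
  have := hom (basis_vec R i) (basis_vec R j).
  rewrite evol_mul_basis (negbTE ij) linear0 evol_mulE => /esym H.
  have : (\row_k (X i 0 k * X j 0 k)) = 0.
    by rewrite -(mulmxK Aunit (\row_k (X i 0 k * X j 0 k))) H mul0mx.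
  by move/rowP/(_ m); rewrite !mxE.
have diag : forall i, \sum_k ((e i k)%:R / (deg e i)%:R) *: X k
                      = evol_mul (struct_A R e) (X i) (X i).
  move=> i; rewrite -hom evol_mul_basis eqxx f_expand.
  by apply: eq_bigr => k _; rewrite !mxE.
have prop0 : forall i k, X i = 0 -> e i k -> X k = 0.
  move=> i k Xi eik; apply/rowP => m; rewrite mxE; apply/eqP; apply: contraT => nz.
  have := diag i; rewrite Xi [RHS]/evol_mul [RHS]big1 => [|j _]; last by rewrite mxE mul0r scale0r.
  move/rowP/(_ m); rewrite summxE mxE (bigD1 k) //= big1 => [|j jk].
    rewrite !mxE eik addr0 => /eqP; rewrite mulf_eq0 (negbTE nz) orbF.
    rewrite /= mul1r invr_eq0 pnatr_eq0 => dk.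
    suff : (0 < deg e i)%N by rewrite lt0n dk.
    by rewrite /deg card_gt0; apply/set0Pn; exists k; rewrite inE.
  rewrite !mxE; have /eqP := disj j k m jk; rewrite mulf_eq0 (negbTE nz) orbF => /eqP ->.
  by rewrite mulr0.
case: (pickP [pred i | X i == 0]) => [i0 /eqP Xi0 | nz0].
  left.
  have allz : forall j, X j = 0.
    move=> j; have /connectP [p pth ->] := conn i0 j.
    elim: p i0 Xi0 pth => [|a p IH] i1 Xi1 /=; first done.
    case/andP => ea pth; exact: IH a (prop0 _ _ Xi1 ea) pth.
  move=> u; rewrite f_expand big1 // => j _.
  by have -> : f (basis_vec R j) = 0 := allz j; rewrite scaler0.
right.
pose p i := odflt i [pick m | X i 0 m != 0].
have hp : forall i, X i 0 (p i) != 0.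
  move=> i; rewrite /p; case: pickP => [m //|h] /=.
  have : X i = 0 by apply/rowP => m; rewrite mxE; apply/eqP; move: (h m) => /negbFE.
  by move/eqP; have := nz0 i; rewrite /= => ->.
have pinj : injective p.
  move=> i j pij; apply/eqP; apply: contraT => ij.
  have /eqP := disj i j (p i) ij; rewrite {2}pij mulf_eq0.
  by rewrite (negbTE (hp i)) (negbTE (hp j)).
pose pi := perm pinj.
have hpi : forall i, X i 0 (pi i) != 0 by move=> i; rewrite permE hp.
have supp : forall i m, X i 0 m != 0 -> m = pi i.
  move=> i m hm; set j := (pi^-1)%g m.
  have hj : X j 0 m != 0 by have := hpi j; rewrite /j permKV.
  case: (eqVneq i j) => [->|ij]; first by rewrite permKV.
  have /eqP := disj i j m ij; rewrite mulf_eq0.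
  by rewrite (negbTE hm) (negbTE hj).
pose alpha i := X i 0 (pi i).
have Xform : forall i, X i = alpha i *: basis_vec R (pi i).
  move=> i; apply/rowP => m; rewrite !mxE /=.
  case: (eqVneq m (pi i)) => [->|mne]; first by rewrite mulr1.
  rewrite mulr0; apply/eqP; apply: contraT => hm.
  by rewrite (supp _ _ hm) eqxx in mne.
have fu : forall u k, f u 0 k = u 0 ((pi^-1)%g k) * alpha ((pi^-1)%g k).
  move=> u k; rewrite f_expand summxE (bigD1 ((pi^-1)%g k)) //= big1 => [|j jne].
    by rewrite -/(X _) Xform !mxE permKV /= eqxx mulr1 addr0.
  rewrite -/(X _) Xform !mxE /=.
  case: (eqVneq k (pi j)) => [kj|]; last by move=> _; rewrite !mulr0.
  by rewrite kj permK eqxx in jne.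
pose g (u : 'rV[R]_n) := \sum_i (u 0 (pi i) / alpha i) *: basis_vec R i.
have gE : forall u j, g u 0 j = u 0 (pi j) / alpha j.
  move=> u j; rewrite summxE (bigD1 j) //= big1 => [|i ij].
    by rewrite !mxE /= eqxx mulr1 addr0.
  by rewrite !mxE /= [j == i]eq_sym (negbTE ij) mulr0.
split.
  exists g.
    by move=> u; apply/rowP => m; rewrite gE fu permK mulfK // hpi.
  by move=> u; apply/rowP => m; rewrite fu gE permKV divfK // hpi.
exists alpha, pi; split => //.
Qed.
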